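(* Let $(A,I)$ be a transversal prism and $m,n\ge0$. For $x\in W_m(A/I_n)$ with ghost coordinates $(w_0,\dots,w_m)$, the transversal coordinates $(t_0,\dots,t_{m+n})$ of $c(x)\in A/I_{m+n}$ are \[ c(x)=(\underbrace{w_m,\dots,w_m}_{n+1\text{ times}},\phi(w_{m-1}),\phi^2(w_{m-2}),\dots,\phi^m(w_0)), \] i.e.\ $t_j$ is the image of $w_m$ in $A/\phi^j(I)$ for $0\le j\le n$, and $t_{n+k}$ is the image of $\phi^k(w_{m-k})$ in $A/\phi^{n+k}(I)$ for $1\le k\le m$.
   Context: A prism $(A,I)$: a $\delta$-ring $A$ (with Frobenius lift $\phi(x)=x^p+p\delta(x)$), ideal $I$ defining a Cartier divisor, $A$ derived $(p,I)$-complete, $p\in I+\phi(I)A$; transversal means $A/I$ is $p$-torsionfree. $I_n=I\phi(I)\cdots\phi^n(I)A$. For transversal prisms the map $A/I_n\to\prod_{i=0}^nA/\phi^i(I)A$ is injective; its components $(t_0,\dots,t_n)$ are the transversal coordinates. The $C_{p^\infty}$-Tambara functor $\underline A$ has value $A/I_n$ at $C_{p^n}$ and structure maps given in transversal coordinates by $F(t_0,\dots,t_n)=(t_0,\dots,t_{n-1})$, $V(t_0,\dots,t_{n-1})=(pt_0,\dots,pt_{n-1},0)$, $N(t_0,\dots,t_{n-1})=(t_0^p,\dots,t_{n-1}^p,\phi(t_{n-1}))$; $V^k_j,N^k_j$ are composites from level $j$ to $k$. $W_m(R)$ denotes $p$-typical Witt vectors with Witt coordinates $(a_0,\dots,a_m)$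 and ghost coordinates $w_i=\sum_{k=0}^ip^ka_k^{p^{i-k}}$. The comparison map $c\colon W_m(A/I_n)\to A/I_{m+n}$ is $c(a_0,\dots,a_m)=\sum_{i=0}^mV^{m+n}_{m+n-i}N^{m+n-i}_n(a_i)$. *)

(* Defs.v *)
(* Elements of quotients A/J are represented by lifts in A,
   and equality in A/J by congruence modulo the ideal J (a predicate on A). *)
From mathcomp Require Import all_boot all_order all_algebra.
Set Implicit Arguments. Unset Strict Implicit. Unset Printing Implicit Defensive.
Import GRing.Theory.
Local Open Scope ring_scope.

Section Defs.
Variable A : comNzRingType.
Variable p : nat.

Definition is_ideal (J : A -> Prop) : Prop :=
  [/\ J 0, (forall x y, J x -> J y -> J (x + y)) & (forall r x, J x -> J (r * x))].

Definition gen_ideal (S : A -> Prop) (x : A) : Prop :=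
  exists (k : nat) (r g : 'I_k -> A), (forall i, S (g i)) /\ x = \sum_(i < k) r i * g i.

Definition cong (J : A -> Prop) (x y : A) : Prop := J (x - y).

Definition is_delta (delta : A -> A) : Prop :=
  [/\ delta 0 = 0, delta 1 = 0,
      (forall x y, delta (x * y) =
          x ^+ p * delta y + y ^+ p * delta x + p%:R * delta x * delta y) &
      (forall x y, delta (x + y) =
          delta x + delta y
          - \sum_(1 <= i < p) ('C(p, i) %/ p)%:R * x ^+ i * y ^+ (p - i))].

Definition phi (delta : A -> A) (x : A) : A := x ^+ p + p%:R * delta x.

Definition phiI (delta : A -> A) (I : A -> Prop) (j : nat) : A -> Prop :=
  gen_ideal (fun y => exists x, I x /\ y = iter j (phi delta) x).

Definition In (delta : A -> A) (I : A -> Prop) (n : nat) : A -> Prop :=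
  gen_ideal (fun y => exists f : nat -> A,
     (forall i, (i <= n)%N -> I (f i)) /\ y = \prod_(i < n.+1) iter i (phi delta) (f i)).

(* ---------- I defines an effective Cartier divisor ----------
   There are f_1..f_r generating the unit ideal such that, for each i,
   I A_{f_i} is generated by a non-zero-divisor d_i of A_{f_i}
   (unfolded without localizations; wlog d_i in I). *)
Definition cartier_divisor (I : A -> Prop) : Prop :=
  exists (r : nat) (f d u : 'I_r -> A),
    \sum_(i < r) u i * f i = 1 /\
    forall i, [/\ I (d i),
      (forall x, I x -> exists (k : nat) (y : A), f i ^+ k * x = d i * y) &
      (forall y, d i * y = 0 -> exists k : nat, f i ^+ k * y = 0)].

(* ---------- derived completeness ----------
   A is derived g-complete iff Rlim(... -g-> A -g-> A) = 0, i.e. both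
   lim and R^1 lim of this tower vanish. *)
Definition derived_complete_elt (g : A) : Prop :=
  (forall x : nat -> A, (forall k, x k = g * x k.+1) -> forall k, x k = 0) /\
  (forall y : nat -> A, exists x : nat -> A, forall k, x k - g * x k.+1 = y k).

Definition derived_complete_pI (I : A -> Prop) : Prop :=
  forall g, (exists r i, I i /\ g = p%:R * r + i) -> derived_complete_elt g.

Definition is_prism (delta : A -> A) (I : A -> Prop) : Prop :=
  [/\ is_delta delta, is_ideal I, cartier_divisor I, derived_complete_pI I &
      exists i j, I i /\ phiI delta I 1 j /\ p%:R = i + j].

(* transversal: A/I is p-torsionfree *)
Definition transversal_prism (delta : A -> A) (I : A -> Prop) : Prop :=
  is_prism delta I /\ forall x, I (p%:R * x) -> I x.

(* ---------- Tambara structure maps, level n -> level n+1 ----------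
   Vf n : A/I_n -> A/I_{n+1} and Nf n : A/I_n -> A/I_{n+1} (on lifts),
   specified by their transversal coordinates:
   V(t_0..t_n) = (p t_0, .., p t_n, 0),  N(t_0..t_n) = (t_0^p, .., t_n^p, phi(t_n)). *)
Definition is_Vmap (delta : A -> A) (I : A -> Prop) (Vf : nat -> A -> A) : Prop :=
  forall n x, (forall j, (j <= n)%N -> cong (phiI delta I j) (Vf n x) (p%:R * x)) /\
              cong (phiI delta I n.+1) (Vf n x) 0.

Definition is_Nmap (delta : A -> A) (I : A -> Prop) (Nf : nat -> A -> A) : Prop :=
  forall n x, (forall j, (j <= n)%N -> cong (phiI delta I j) (Nf n x) (x ^+ p)) /\
              cong (phiI delta I n.+1) (Nf n x) (phi delta x).

Fixpoint iter_lvl (G : nat -> A -> A) (j d : nat) (x : A) : A :=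
  match d with
  | 0 => x
  | d'.+1 => G (j + d')%N (iter_lvl G j d' x)
  end.

Definition cmap (Vf Nf : nat -> A -> A) (m n : nat) (a : nat -> A) : A :=
  \sum_(i < m.+1) iter_lvl Vf (m + n - i) i (iter_lvl Nf n (m - i) (a i)).

Definition ghost (a : nat -> A) (i : nat) : A :=
  \sum_(k < i.+1) (p ^ k)%:R * a k ^+ (p ^ (i - k)).

End Defs.

(* Main.v *)
Require Import Defs.
From mathcomp Require Import all_boot all_order all_algebra.
From mathcomp Require Import ring zify.
Import GRing.Theory.
Local Open Scope ring_scope.


Set Implicit Arguments.
Section Aux.
Variable A : comNzRingType.

Lemma gen_ideal_ideal (S : A -> Prop) : is_ideal (gen_ideal S).
Proof.
split.
- exists 0%N, (fun _ => 0), (fun _ => 0); split; last by rewrite big_ord0.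
  by case.
- move=> x y [k1 [r1 [g1 [H1 ->]]]] [k2 [r2 [g2 [H2 ->]]]].
  exists (k1 + k2)%N.
  exists (fun i : 'I_(k1 + k2) => match split i with inl a => r1 a | inr b => r2 b end).
  exists (fun i : 'I_(k1 + k2) => match split i with inl a => g1 a | inr b => g2 b end).
  split.
  + by move=> i; case: (split i).
  + rewrite big_split_ord /=; congr (_ + _); apply: eq_bigr => i _.
      by rewrite (unsplitK (inl i)).
    by rewrite (unsplitK (inr i)).
- move=> r x [k [r1 [g1 [H1 ->]]]].
  exists k, (fun i => r * r1 i), g1; split => //.
  by rewrite mulr_sumr; apply: eq_bigr => i _; rewrite mulrA.
Qed.

Variable J : A -> Prop.
Hypothesis HJ : is_ideal J.

Lemma congxx x : cong J x x.
Proof. by case: HJ; rewrite /cong subrr. Qed.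

Lemma J_opp x : J x -> J (- x).
Proof. by case: HJ => _ _ HM Hx; rewrite -mulN1r; apply: HM. Qed.

Lemma cong_sym x y : cong J x y -> cong J y x.
Proof. by rewrite /cong => H; rewrite -opprB; apply: J_opp. Qed.

Lemma cong_trans x y z : cong J x y -> cong J y z -> cong J x z.
Proof.
case: HJ => _ HD _; rewrite /cong => H1 H2.
by have := HD _ _ H1 H2; rewrite addrA subrK.
Qed.

Lemma congD x y x' y' : cong J x x' -> cong J y y' -> cong J (x + y) (x' + y').
Proof.
case: HJ => _ HD _; rewrite /cong => H1 H2.
have := HD _ _ H1 H2; congr J; rewrite opprD; ring.
Qed.

Lemma congM x y x' y' : cong J x x' -> cong J y y' -> cong J (x * y) (x' * y').
Proof.
case: HJ => _ HD HM; rewrite /cong => H1 H2.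
have := HD _ _ (HM y _ H1) (HM x' _ H2); congr J; ring.
Qed.

Lemma congX x x' k : cong J x x' -> cong J (x ^+ k) (x' ^+ k).
Proof.
move=> H; elim: k => [|k IH]; first by rewrite !expr0; apply: congxx.
by rewrite !exprS; apply: congM.
Qed.

Lemma cong_sum n (F G : 'I_n -> A) :
  (forall i, cong J (F i) (G i)) -> cong J (\sum_(i < n) F i) (\sum_(i < n) G i).
Proof.
move=> H; apply: (big_ind2 (cong J)); first exact: congxx.
  by move=> *; apply: congD.
by move=> i _; apply: H.
Qed.

Lemma cong_eqr x y y' : cong J x y -> y = y' -> cong J x y'.
Proof. by move=> H <-. Qed.
End Aux.
Arguments cong_trans {A J} HJ {x y z}.
Arguments cong_sym {A J} HJ {x y}.
Arguments congD {A J} HJ {x y x' y'}.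
Arguments congM {A J} HJ {x y x' y'}.
Arguments congX {A J} HJ {x x'} k.
Arguments cong_eqr {A J x y y'}.
Unset Implicit Arguments.

Section Phi.
Variable A : comNzRingType.
Variable p : nat.
Variable delta : A -> A.
Hypothesis Hp : prime p.
Hypothesis Hd : is_delta p delta.

Local Notation phi := (phi p delta).

Lemma phi0 : phi 0 = 0.
Proof.
case: Hd => H0 _ _ _; rewrite /phi H0 mulr0 addr0 expr0n.
by rewrite eqn0Ngt prime_gt0.
Qed.

Lemma phi1 : phi 1 = 1.
Proof. by case: Hd => _ H1 _ _; rewrite /phi H1 mulr0 addr0 expr1n. Qed.

Lemma phiM x y : phi (x * y) = phi x * phi y.
Proof. case: Hd => _ _ HM _; rewrite /phi HM exprMn; ring. Qed.

Lemma phiD x y : phi (x + y) = phi x + phi y.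
Proof.
case: Hd => _ _ _ HD; rewrite /phi HD.
have p1 : (1 <= p)%N by apply: prime_gt0.
set S := \sum_(1 <= i < p) _.
have -> : (x + y) ^+ p = y ^+ p + x ^+ p + p%:R * S.
  rewrite addrC exprDn.
  rewrite -(big_mkord xpredT (fun i => y ^+ (p - i) * x ^+ i *+ 'C(p, i))).
  rewrite big_ltn // big_nat_recr //= subn0 subnn bin0 binn !expr0 mulr1 mul1r !mulr1n.
  rewrite /S mulr_sumr [X in y ^+ p + X = _]addrC addrA; congr (_ + _).
  apply: eq_big_nat => i /andP [i1 ip].
  have hd : (p %| 'C(p, i))%N by apply: prime_dvd_bin => //; rewrite i1 ip.
  rewrite -{1}(divnK hd) -mulr_natl natrM; ring.
ring.
Qed.

Lemma phiN x : phi (- x) = - phi x.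
Proof.
apply/eqP; rewrite -subr_eq0 opprK -phiD addrC subrr phi0 //.
Qed.

Lemma phiB x y : phi (x - y) = phi x - phi y.
Proof. by rewrite phiD phiN. Qed.

Lemma iter_phiD k x y : iter k phi (x + y) = iter k phi x + iter k phi y.
Proof. by elim: k => //= k ->; rewrite phiD. Qed.
Lemma iter_phiM k x y : iter k phi (x * y) = iter k phi x * iter k phi y.
Proof. by elim: k => //= k ->; rewrite phiM. Qed.
Lemma iter_phi0 k : iter k phi 0 = 0.
Proof. by elim: k => //= k ->; rewrite phi0. Qed.
Lemma iter_phi1 k : iter k phi 1 = 1.
Proof. by elim: k => //= k ->; rewrite phi1. Qed.
Lemma iter_phin k n : iter k phi n%:R = n%:R.
Proof.
elim: n => [|n IH]; first by rewrite iter_phi0.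
by rewrite -addn1 natrD iter_phiD IH iter_phi1.
Qed.
Lemma iter_phiX k x e : iter k phi (x ^+ e) = (iter k phi x) ^+ e.
Proof.
elim: e => [|e IH]; first by rewrite !expr0 iter_phi1.
by rewrite !exprS iter_phiM IH.
Qed.
Lemma iter_phi_sum k n (F : 'I_n -> A) :
  iter k phi (\sum_(i < n) F i) = \sum_(i < n) iter k phi (F i).
Proof.
apply: (big_morph _ (iter_phiD k) (iter_phi0 k)).
Qed.

Variable I : A -> Prop.

Lemma phi_cong L x y : cong (phiI p delta I L) x y ->
  cong (phiI p delta I L.+1) (phi x) (phi y).
Proof.
rewrite /cong -phiB => -[k [r [g [Hg ->]]]].
exists k, (fun i => phi (r i)), (fun i => phi (g i)); split.
  move=> i; case: (Hg i) => z [Iz ->]; exists z; split => //.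
by rewrite (big_morph _ phiD phi0); apply: eq_bigr => i _; rewrite phiM.
Qed.

Lemma iter_phi_cong L k x y : cong (phiI p delta I L) x y ->
  cong (phiI p delta I (L + k)) (iter k phi x) (iter k phi y).
Proof.
move=> H; elim: k => [|k IH]; first by rewrite addn0.
by rewrite addnS /=; apply: phi_cong.
Qed.
End Phi.


Section Chains.
Variable A : comNzRingType.
Variable p : nat.
Variable delta : A -> A.
Variable I : A -> Prop.
Variables Vf Nf : nat -> A -> A.
Hypothesis Hp : prime p.
Hypothesis Hd : is_delta p delta.
Hypothesis HV : is_Vmap p delta I Vf.
Hypothesis HN : is_Nmap p delta I Nf.

Local Notation J := (phiI p delta I).
Local Notation phi := (phi p delta).
Let HJ j : is_ideal (J j) := gen_ideal_ideal _ _.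

Lemma Nchain n d x :
  (forall k, (k <= d)%N -> cong (J (n + k)) (iter_lvl Nf n d x) ((iter k phi x) ^+ (p ^ (d - k)))) /\
  (forall j, (j <= n)%N -> cong (J j) (iter_lvl Nf n d x) (x ^+ (p ^ d))).
Proof.
elim: d => [|d [IH2 IH1]].
  split.
    by move=> k; rewrite leqn0 => /eqP ->; rewrite /= expn0 expr1 addn0; apply: congxx.
  by move=> j _; rewrite /= expn0 expr1; apply: congxx.
rewrite /=; set y := iter_lvl Nf n d x.
split.
- move=> k; rewrite leq_eqVlt => /orP [/eqP -> | kd].
    rewrite subnn expn0 expr1.
    case: (HN (n + d) y) => _ H2.
    rewrite addnS; apply: (cong_trans (HJ _) H2).
    have := IH2 d (leqnn d); rewrite subnn expn0 expr1 => H.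
    exact: (@phi_cong A p delta Hp Hd I _ _ _ H).
  case: (HN (n + d) y) => H1 _.
  have kd' : (k <= d)%N by [].
  have := H1 (n + k)%N; rewrite leq_add2l => /(_ kd') H.
  apply: (cong_trans (HJ _) H).
  apply: (cong_eqr (congX (HJ _) p (IH2 k kd'))).
  by rewrite -exprM -expnSr subSn.
- move=> j jn.
  case: (HN (n + d) y) => H1 _.
  have := H1 j (leq_trans jn (leq_addr _ _)) => H.
  apply: (cong_trans (HJ _) H).
  apply: (cong_eqr (congX (HJ _) p (IH1 j jn))).
  by rewrite -exprM -expnSr.
Qed.

Lemma Vchain L d y :
  (forall j, (j <= L)%N -> cong (J j) (iter_lvl Vf L d y) (p%:R ^+ d * y)) /\
  (forall j, (L < j <= L + d)%N -> cong (J j) (iter_lvl Vf L d y) 0).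
Proof.
elim: d => [|d [IH1 IH2]].
  split; first by move=> j _; rewrite /= expr0 mul1r; apply: congxx.
  by move=> j; rewrite addn0 => /andP [a b]; exfalso; lia.
rewrite /=; set z := iter_lvl Vf L d y.
case: (HV (L + d) z) => H1 H2.
split.
- move=> j jL.
  apply: (cong_trans (HJ _) (H1 j (leq_trans jL (leq_addr _ _)))).
  apply: (cong_eqr (congM (HJ _) (congxx (HJ _) p%:R) (IH1 j jL))).
  by rewrite exprS mulrA.
- move=> j /andP [Lj jLd].
  case: (ltnP j (L + d).+1) => hj.
    apply: (cong_trans (HJ _) (H1 j hj)).
    have h : (L < j <= L + d)%N by rewrite Lj.
    apply: (cong_eqr (congM (HJ _) (congxx (HJ _) p%:R) (IH2 j h))).
    by rewrite mulr0.
  have -> : j = (L + d).+1 by lia.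
  exact: H2.
Qed.
End Chains.

Theorem lemma4p2 (A : comNzRingType) (p : nat) (delta : A -> A) (I : A -> Prop)
    (Vf Nf : nat -> A -> A) (m n : nat) (a : nat -> A) :
  prime p ->
  transversal_prism p delta I ->
  is_Vmap p delta I Vf ->
  is_Nmap p delta I Nf ->
  (forall j, (j <= n)%N ->
     cong (phiI p delta I j) (cmap Vf Nf m n a) (ghost p a m)) /\
  (forall k, (1 <= k <= m)%N ->
     cong (phiI p delta I (n + k)) (cmap Vf Nf m n a)
          (iter k (phi p delta) (ghost p a (m - k)))).
Proof.
move=> Hp [[Hd _ _ _ _] _] HV HN.
have HJ j : is_ideal (phiI p delta I j) := gen_ideal_ideal _ _.
split.
- move=> j jn; rewrite /cmap /ghost.
  apply: cong_sum => // i.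
  have im : (i <= m)%N by rewrite -ltnS.
  have [V1 _] := Vchain A p delta I Vf Hp HV (m + n - i)%N i (iter_lvl Nf n (m - i) (a i)).
  have jL : (j <= m + n - i)%N by lia.
  apply: (cong_trans (HJ _) (V1 j jL)).
  have [_ N1] := Nchain A p delta I Nf Hp Hd HN n (m - i)%N (a i).
  apply: (cong_eqr (congM (HJ _) (congxx (HJ _) _) (N1 j jn))).
  by rewrite natrX.
- move=> k /andP [k1 km]; rewrite /cmap /ghost.
  rewrite (@iter_phi_sum A p delta Hp Hd).
  rewrite (big_ord_widen _ (fun i => iter k (phi p delta)
              ((p ^ i)%:R * a i ^+ (p ^ (m - k - i)))) (_ : (m - k).+1 <= m.+1)%N);
    last by lia.
  rewrite [X in cong _ _ X]big_mkcond /=.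
  apply: (cong_sum (HJ _)) => i.
  have im : (i <= m)%N by rewrite -ltnS.
  have [V1 V2] := Vchain A p delta I Vf Hp HV (m + n - i)%N i (iter_lvl Nf n (m - i) (a i)).
  case: ifP => hi.
    have jL : (n + k <= m + n - i)%N by lia.
    apply: (cong_trans (HJ _) (V1 _ jL)).
    have [N2 _] := Nchain A p delta I Nf Hp Hd HN n (m - i)%N (a i).
    have ki : (k <= m - i)%N by lia.
    apply: (cong_eqr (congM (HJ _) (congxx (HJ _) _) (N2 k ki))).
    rewrite (@iter_phiM A p delta Hd) (@iter_phin A p delta Hp Hd) (@iter_phiX A p delta Hd) natrX.
    by have -> : (m - k - i = m - i - k)%N by lia.
  apply: V2; apply/andP; split; lia.
Qed.
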